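(* Let $G=(V,E)$ be a graph with arboricity $a$ and unique node identifiers. Consider the following procedure, run in phases $i=1,2,\dots$. At the beginning of phase $i$, let $d_i(u)$ be the number of edges incident to $u$ not yet assigned a direction, and let $\overline{d_i}=\sum_{u\in V}d_i(u)/|\{u\in V\mid d_i(u)>0\}|$. In phase $i$, node $u$ is inactive if $d_i(u)=0$, active if $0<d_i(u)\le 2\overline{d_i}$, and waiting if $d_i(u)>2\overline{d_i}$; each undirected edge $\{u,v\}$ is directed from $u$ to $v$ if $u$ is active and $v$ is waiting, or if both are active and $\mathrm{id}(u)<\mathrm{id}(v)$. Then after $O(\log n)$ phases all edges are directed, and the resulting orientation is an $O(a)$-orientation.
   Context: $n=|V|$. The arboricity of $G$ is the minimum number of forests into which its edge set can be partitioned. An orientation assigns each edge a direction; a $k$-orientation is one in which every node has at most $k$ outgoing edges. *)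

(* Defs.v *)
From mathcomp Require Import all_boot all_order all_algebra.
Set Implicit Arguments. Unset Strict Implicit. Unset Printing Implicit Defensive.
Import Order.TTheory GRing.Theory Num.Theory.

(* Graphs: V : finType, e : rel V symmetric and irreflexive (simple graph). *)

Definition is_cycle (V : finType) (r : rel V) (c : seq V) : bool :=
  [&& 3 <= size c, uniq c & cycle r c].

Definition acyclic (V : finType) (r : rel V) : Prop :=
  forall c : seq V, ~~ is_cycle r c.

Definition forest_partition (V : finType) (e : rel V) (k : nat) : Prop :=
  exists col : V -> V -> nat,
    (forall u v, col u v = col v u) /\
    (forall u v, e u v -> col u v < k) /\
    (forall c, c < k -> acyclic (fun x y => e x y && (col x y == c))).

Definition is_arboricity (V : finType) (e : rel V) (a : nat) : Prop :=
  forest_partition e a /\ (forall k, forest_partition e k -> a <= k).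

(* The procedure.  A state is the set D of directed edges (u,v) meaning u -> v. *)
Section Procedure.
Variables (V : finType) (e : rel V) (id : V -> nat).

Definition undirected (D : {set V * V}) (u v : V) : bool :=
  [&& e u v, (u, v) \notin D & (v, u) \notin D].

Definition rdeg (D : {set V * V}) (u : V) : nat := #|[set v | undirected D u v]|.

Definition avg_deg (D : {set V * V}) : rat :=
  (((\sum_(u : V) rdeg D u)%N)%:R / (#|[set u | (0 < rdeg D u)%N]|)%:R)%R.

Definition is_active (D : {set V * V}) (u : V) : bool :=
  (0 < rdeg D u)%N && (((rdeg D u)%:R : rat) <= 2 * avg_deg D)%R.

Definition is_waiting (D : {set V * V}) (u : V) : bool :=
  (2 * avg_deg D < ((rdeg D u)%:R : rat))%R.

Definition phase (D : {set V * V}) : {set V * V} :=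
  D :|: [set p : V * V | undirected D p.1 p.2 &&
          ((is_active D p.1 && is_waiting D p.2) ||
           [&& is_active D p.1, is_active D p.2 & id p.1 < id p.2])].

Definition after (i : nat) : {set V * V} := iter i phase set0.

End Procedure.

(* Main.v *)
Require Import Defs.
From mathcomp Require Import all_boot all_order all_algebra.
From mathcomp Require Import zify.
Set Implicit Arguments. Unset Strict Implicit. Unset Printing Implicit Defensive.
Import Order.TTheory GRing.Theory Num.Theory.

Section Forest.
Variables (V : finType) (F : rel V).
Hypotheses (Fsym : symmetric F) (Firr : irreflexive F) (Facy : acyclic F).

Lemma split_tail x q w : w \in x :: q -> path F x q -> uniq (x :: q) ->
  exists q2, [/\ path F w q2, last w q2 = last x q & forall s, uniq (x :: q ++ s) -> uniq (w :: q2 ++ s)].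
Proof.
rewrite in_cons => /orP [/eqP -> | wq] pq uq.
  by exists q; split.
case/splitPr: wq pq uq => q1 q2 pq uq.
exists q2; split.
- by move: pq; rewrite cat_path /= => /and3P [].
- by rewrite last_cat.
- move=> s; rewrite -catA cat_cons cons_uniq => /andP [_ H]; move: H.
  by rewrite cat_uniq => /and3P [_ _].
Qed.

Lemma leaf k x p : #|V| - size p <= k -> uniq (x :: p) -> path F x p ->
  exists y, ((y == x) || [exists w, F w y]) && (#|[set w | F y w]| <= 1).
Proof.
elim: k p => [|k IH] p hk up pp.
- have hs : size (x :: p) <= #|V| by move/card_uniqP: (up) => <-; exact: max_card.
  have h1 : (size p).+1 <= #|V| by [].
  exfalso; lia.
move ey: (last x p) => y.
have [/existsP [w /andP [Fyw wn]] | hno] := boolP [exists w, F y w && (w \notin x :: p)].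
-
  apply: (IH (rcons p w)).
  + have h2 : size (x :: rcons p w) <= #|V|.
      have : uniq (x :: rcons p w) by rewrite -rcons_cons rcons_uniq wn up.
      by move/card_uniqP => <-; exact: max_card.
    move: h2 hk; rewrite /= !size_rcons.
    move: (size p) (#|V|) => a b ha hb; lia.
  + by rewrite -rcons_cons rcons_uniq wn up.
  + by rewrite rcons_path pp ey Fyw.
have nb : forall w, F y w -> w \in x :: p.
  move=> w Fw; apply/negPn/negP => wn; move/negP: hno; apply.
  by apply/existsP; exists w; rewrite Fw wn.
case: (leqP #|[set w | F y w]| 1) => hdeg.
  exists y; rewrite hdeg andbT.
  move: pp ey; case/lastP: p {hk up nb hno hdeg} => [|q z]; first by move=> _ <-; rewrite eqxx.
  rewrite rcons_path last_rcons => /andP [_ Fz] <-.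
  by apply/orP; right; apply/existsP; exists (last x q).
exfalso.
case/card_gt1P: hdeg => w1 [w2 []]; rewrite !inE => F1 F2 n12.
move: pp up nb F1 F2 ey; case/lastP: p {hk hno} => [|q z].
  move=> _ _ nb F1 F2 /= ey; subst y; move: (nb _ F1) (nb _ F2); rewrite !inE /= => /eqP e1 /eqP e2.
  by move: n12; rewrite e1 e2 eqxx.
rewrite last_rcons rcons_path => /andP [pq Ftz] up nb F1 F2 ey; subst y.
have [w [Fzw wz wt]] : exists w, [/\ F z w, w \in x :: q & w != last x q].
  have nz : forall w, F z w -> w \in x :: q.
    move=> w Fw; move: (nb _ Fw); rewrite -rcons_cons mem_rcons in_cons => /orP [/eqP wz|//].
    by move: Fw; rewrite wz Firr.
  case: (eqVneq w1 (last x q)) => h1.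
    exists w2; split => //; first exact: nz.
    by rewrite -h1 eq_sym.
  by exists w1; split => //; exact: nz.
have uq : uniq (x :: q) by move: up; rewrite -rcons_cons rcons_uniq => /andP [].
have [q2 [pq2 lq2 us]] := split_tail wz pq uq.
have u2 : uniq (w :: q2 ++ [:: z]) by apply: us; rewrite cats1 -rcons_cons.
apply: (negP (Facy (w :: rcons q2 z))).
case: q2 pq2 lq2 {us} u2 => [|t q2] pq2 lq2 u2.
  by move: wt; rewrite -lq2 /= eqxx.
rewrite /is_cycle; apply/and3P; split.
- by rewrite /= size_rcons.
- by rewrite -cats1.
rewrite [cycle _ _]/= !rcons_path last_rcons; move: pq2 lq2 => /= /andP [-> ->] ->.
by rewrite Ftz Fzw.
Qed.

End Forest.

Lemma forest_count (V : finType) n : forall (F : rel V) (S : {set V}),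
  #|S| <= n -> symmetric F -> irreflexive F -> acyclic F ->
  (forall x y, F x y -> x \in S) ->
  #|[set p : V * V | F p.1 p.2]| <= 2 * #|S|.
Proof.
elim: n => [|n IH] F S hS Fsym Firr Facy supp.
  have S0 : S = set0 by apply/eqP; rewrite -cards_eq0; lia.
  rewrite S0 cards0 leqn0 cards_eq0; apply/eqP/setP => p; rewrite !inE.
  by apply/negP => /supp; rewrite S0 inE.
have [S0 | [x xS]] := set_0Vmem S.
  rewrite S0 cards0 leqn0 cards_eq0; apply/eqP/setP => p; rewrite !inE.
  by apply/negP => /supp; rewrite S0 inE.
have [y /andP [hy deg]] := leaf Firr Facy (k := #|V|) (x := x) (p := [::]) (leq_subr _ _) isT isT.
have yS : y \in S.
  case/orP: hy => [/eqP -> //| /existsP [w Fwy]].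
  by apply: (supp y w); rewrite Fsym.
pose F' := [rel a b | [&& F a b, a != y & b != y]].
have F'sym : symmetric F'.
  by move=> a b /=; rewrite Fsym; case: (a != y); case: (b != y); rewrite ?andbF ?andbT.
have F'irr : irreflexive F' by move=> a /=; rewrite Firr.
have F'acy : acyclic F'.
  move=> c; apply/negP => /and3P [h1 h2 h3]; apply: (negP (Facy c)).
  apply/and3P; split => //; apply: sub_cycle h3 => a b /and3P [].
  by [].
have hS' : #|S :\ y| <= n by move: hS; rewrite (cardsD1 y S) yS; lia.
have supp' : forall a b, F' a b -> a \in S :\ y.
  move=> a b /and3P [Fab ay _]; rewrite !inE ay /=; exact: supp Fab.
have IHc := IH F' (S :\ y) hS' F'sym F'irr F'acy supp'.
have sub : [set p : V * V | F p.1 p.2] \subset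
   [set p : V * V | F' p.1 p.2] :|: (((fun w => (y, w)) @: [set w | F y w]) :|:
                                   ((fun w => (w, y)) @: [set w | F y w])).
  apply/subsetP => [[a b]]; rewrite !inE /= => Fab.
  case: (eqVneq a y) => [ay | ay].
    apply/orP; right; apply/orP; left; apply/imsetP; exists b; rewrite ?inE -?ay //.
  case: (eqVneq b y) => [eby | eby].
    apply/orP; right; apply/orP; right; apply/imsetP; exists a; [by rewrite inE -eby Fsym | by rewrite eby].
  by apply/orP; left; rewrite /= Fab.
have c1 := subset_leq_card sub.
have c2 := leq_of_leqif (leq_card_setU [set p : V * V | F' p.1 p.2] (((fun w => (y, w)) @: [set w | F y w]) :|:
                                   ((fun w => (w, y)) @: [set w | F y w]))).
have c3 := leq_of_leqif (leq_card_setU ((fun w => (y, w)) @: [set w | F y w]) ((fun w => (w, y)) @: [set w | F y w])).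
have c4 := leq_imset_card (fun w => (y, w)) [set w | F y w].
have c5 := leq_imset_card (fun w => (w, y)) [set w | F y w].
have e1 := cardsD1 y S. rewrite yS in e1.
move: c1 c2 c3 c4 c5 e1 IHc deg.
move: #|[set p : V * V | F p.1 p.2]| #|[set p : V * V | F' p.1 p.2]| #|S| #|S :\ y|.
move: #|[set w | F y w]| #|((fun w => (y, w)) @: [set w | F y w])| #|((fun w => (w, y)) @: [set w | F y w])|.
move: #|[set p : V * V | F' p.1 p.2] :|: (((fun w => (y, w)) @: [set w | F y w]) :|: ((fun w => (w, y)) @: [set w | F y w]))|.
move: #|((fun w => (y, w)) @: [set w | F y w]) :|: ((fun w => (w, y)) @: [set w | F y w])|.
move=> *; lia.
Qed.

Lemma acyclic_sub (V : finType) (r r' : rel V) : subrel r r' -> acyclic r' -> acyclic r.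
Proof.
move=> sr ac c; apply/negP => /and3P [h1 h2 h3]; apply: (negP (ac c)).
by apply/and3P; split => //; apply: sub_cycle h3.
Qed.

Lemma cardU_le (T : finType) (A B : {set T}) : #|A :|: B| <= #|A| + #|B|.
Proof. exact: leq_of_leqif (leq_card_setU A B). Qed.

Section Main.
Variables (V : finType) (e : rel V) (id : V -> nat) (a : nat) (col : V -> V -> nat).
Hypotheses (esym : symmetric e) (eirr : irreflexive e) (idinj : injective id).
Hypotheses (colsym : forall u v, col u v = col v u)
  (colk : forall u v, e u v -> col u v < a)
  (colacy : forall c, c < a -> acyclic (fun x y => e x y && (col x y == c))).

Definition pos (D : {set V * V}) := [set u | 0 < rdeg e D u].
Definition sdeg (D : {set V * V}) := \sum_(u : V) rdeg e D u.

Lemma und_sym D u v : undirected e D u v = undirected e D v u.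
Proof. by rewrite /undirected esym; case: ((u, v) \in D); case: ((v, u) \in D); rewrite ?andbF. Qed.

Lemma sdegE D : sdeg D = #|[set p : V * V | undirected e D p.1 p.2]|.
Proof.
rewrite /sdeg -sum1_card.
rewrite (eq_bigl (fun p : V * V => true && undirected e D p.1 p.2)); last first.
  by move=> p; rewrite inE.
rewrite -(pair_big_dep (fun _ => true) (fun u v => undirected e D u v) (fun _ _ => 1)) /=.
apply: eq_bigr => u _; rewrite /rdeg -sum1_card; apply: eq_bigl => v; by rewrite inE.
Qed.

Lemma und_pos D u v : undirected e D u v -> u \in pos D.
Proof.
move=> h; rewrite inE /rdeg card_gt0; apply/set0Pn; exists v; by rewrite inE.
Qed.

Lemma sdeg_bound D : sdeg D <= 2 * a * #|pos D|.
Proof.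
rewrite sdegE.
have H : forall k, k <= a -> #|[set p : V * V | undirected e D p.1 p.2 && (col p.1 p.2 < k)]| <= k * (2 * #|pos D|).
  elim => [|k IH] hk.
    rewrite leqn0 cards_eq0; apply/eqP/setP => p; by rewrite !inE ltn0 andbF.
  have sub : [set p : V * V | undirected e D p.1 p.2 && (col p.1 p.2 < k.+1)] \subset
     [set p : V * V | undirected e D p.1 p.2 && (col p.1 p.2 < k)] :|:
     [set p : V * V | undirected e D p.1 p.2 && (col p.1 p.2 == k)].
    apply/subsetP => p; rewrite !inE ltnS leq_eqVlt => /andP [-> /orP [->|->]] //.
    by rewrite orbT.
  have c1 := subset_leq_card sub.
  have c2 := cardU_le [set p : V * V | undirected e D p.1 p.2 && (col p.1 p.2 < k)]
     [set p : V * V | undirected e D p.1 p.2 && (col p.1 p.2 == k)].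
  have c3 := IH (ltnW hk).
  have c4 : #|[set p : V * V | undirected e D p.1 p.2 && (col p.1 p.2 == k)]| <= 2 * #|pos D|.
    apply: (@forest_count V #|pos D| (fun x y => undirected e D x y && (col x y == k))).
    - by [].
    - by move=> x y /=; rewrite und_sym colsym.
    - by move=> x /=; rewrite /undirected eirr.
    - apply: acyclic_sub (colacy hk) => x y /andP [/and3P [exy _ _] ->]; by rewrite exy.
    - by move=> x y /andP [h _]; apply: und_pos h.
  rewrite mulSn; lia.
have := H a (leqnn a).
have -> : [set p : V * V | undirected e D p.1 p.2 && (col p.1 p.2 < a)] =
          [set p : V * V | undirected e D p.1 p.2].
  apply/setP => p; rewrite !inE; case h: (undirected e D p.1 p.2) => //=.
  by apply: colk; case/and3P: h.
rewrite mulnA; lia.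
Qed.


Notation ph := (phase e id).
Definition W (D : {set V * V}) := [set u | is_waiting e D u].

Lemma und_phase D u v : undirected e (ph D) u v -> undirected e D u v.
Proof.
rewrite /undirected /phase !inE negb_or negb_or => /and3P [-> /andP [-> _] /andP [-> _]].
by [].
Qed.

Lemma rdeg_phase D u : rdeg e (ph D) u <= rdeg e D u.
Proof.
apply: subset_leq_card; apply/subsetP => v; rewrite !inE; exact: und_phase.
Qed.

Lemma avgE D : avg_deg e D = ((sdeg D)%:R / (#|pos D|)%:R)%R.
Proof. by []. Qed.

Lemma avg_ge0 D : (0 <= avg_deg e D)%R.
Proof. by rewrite avgE divr_ge0 ?ler0n. Qed.

Lemma waiting_pos D u : is_waiting e D u -> 0 < rdeg e D u.
Proof.
rewrite /is_waiting => h; rewrite -(ltr0n rat); apply: le_lt_trans h.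
by rewrite mulr_ge0 ?avg_ge0.
Qed.

Lemma notactive D u : 0 < rdeg e D u -> ~~ is_active e D u -> is_waiting e D u.
Proof.
by move=> h; rewrite /is_active h /= /is_waiting ltNge.
Qed.

Lemma active_phase D u : is_active e D u -> rdeg e (ph D) u = 0.
Proof.
move=> act; apply/eqP; rewrite cards_eq0; apply/eqP/setP => v; rewrite !inE.
apply/negP => hp.
have hD := und_phase hp.
have hD' : undirected e D v u by rewrite und_sym.
have vpos : 0 < rdeg e D v by have := und_pos hD'; rewrite inE.
move: (hp); rewrite /undirected /phase !inE !negb_or => /and3P [euv /andP [_ n1] /andP [_ n2]].
have [wv | nwv] := boolP (is_waiting e D v).
  by move: n1; rewrite /= hD act wv.
have av : is_active e D v by rewrite /is_active vpos /= leNgt.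
have uv : u != v by apply/eqP => h; move: euv; rewrite h eirr.
have iuv : id u != id v by apply/eqP => /idinj h; move: uv; rewrite h eqxx.
case: (ltngtP (id u) (id v)) => h.
- by move: n1; rewrite /= hD act av h orbT.
- by move: n2; rewrite /= und_sym hD act av h orbT.
- by move: iuv; rewrite h eqxx.
Qed.

Lemma active_bound D u : is_active e D u -> rdeg e D u <= 4 * a.
Proof.
move=> act; have /andP [dpos hle] := act.
have npos : 0 < #|pos D| by rewrite card_gt0; apply/set0Pn; exists u; rewrite inE.
move: hle; rewrite avgE mulrA ler_pdivlMr ?ltr0n // -natrM -natrM ler_nat => hle.
have := sdeg_bound D.
move: hle npos; move: (rdeg e D u) (sdeg D) #|pos D| => x y z; nia.
Qed.

Lemma waiting_count D : 2 * #|W D| <= #|pos D|.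
Proof.
have WP : W D \subset pos D by apply/subsetP => u; rewrite !inE; exact: waiting_pos.
have [n0 | npos] := posnP #|pos D|.
  have := subset_leq_card WP; rewrite n0; lia.
have h1 : forall u, u \in W D -> (2 * sdeg D).+1 <= rdeg e D u * #|pos D|.
  move=> u; rewrite inE /is_waiting avgE mulrA ltr_pdivrMr ?ltr0n // -natrM -natrM ltr_nat.
  by [].
have h2 : \sum_(u in W D) (2 * sdeg D).+1 <= \sum_(u in W D) rdeg e D u * #|pos D|.
  by apply: leq_sum.
rewrite sum_nat_const -big_distrl /= in h2.
have h3 : \sum_(u in W D) rdeg e D u <= sdeg D.
  rewrite /sdeg big_mkcond /=; apply: leq_sum => u _; by case: ifP.
have h4 := leq_mul h3 (leqnn #|pos D|).
move: h2 h4; move: (\sum_(u in W D) rdeg e D u) (sdeg D) #|pos D| #|W D| => x y z w.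
nia.
Qed.

Lemma halving D : 2 * #|pos (ph D)| <= #|pos D|.
Proof.
apply: leq_trans (waiting_count D); rewrite leq_mul2l; apply/orP; right.
apply: subset_leq_card; apply/subsetP => u; rewrite !inE => h.
apply: notactive; first exact: leq_trans h (rdeg_phase D u).
by apply/negP => /active_phase; move: h => /[swap] ->.
Qed.

Lemma after_pos k : 2 ^ k * #|pos (after e id k)| <= #|V|.
Proof.
elim: k => [|k IH].
  by rewrite expn0 mul1n max_card.
have := halving (after e id k).
change (after e id k.+1) with (ph (after e id k)).
rewrite expnS; move: IH; move: (2 ^ k) #|pos (ph (after e id k))| #|pos (after e id k)| => x y z.
nia.
Qed.

Lemma out_inv k u : #|[set v | (u, v) \in after e id k]| <= 4 * a /\
  (0 < rdeg e (after e id k) u -> [set v | (u, v) \in after e id k] = set0).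
Proof.
elim: k => [|k [IH1 IH2]].
  have -> : [set v | (u, v) \in after e id 0] = set0 by apply/setP => v; rewrite !inE.
  by rewrite cards0.
change (after e id k.+1) with (ph (after e id k)).
set D := after e id k.
have [act | nact] := boolP (is_active e D u).
  have dpos : 0 < rdeg e D u by case/andP: act.
  split; last by rewrite active_phase.
  apply: leq_trans (active_bound act).
  apply: subset_leq_card; apply/subsetP => v; rewrite !inE => /orP [h | ].
    have : v \in [set v | (u, v) \in D] by rewrite inE.
    by rewrite (IH2 dpos) inE.
  move=> /andP [h _]; exact: h.
have sub : [set v | (u, v) \in ph D] \subset [set v | (u, v) \in D].
  apply/subsetP => v; rewrite !inE => /orP [// | ].
  move=> /andP [_ /orP [/andP [h _] | /and3P [h _ _]]];
  by move: nact; rewrite h.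
split; first exact: leq_trans (subset_leq_card sub) IH1.
move=> h; apply/eqP; rewrite -subset0 -(IH2 (leq_trans h (rdeg_phase D u))).
exact: sub.
Qed.

End Main.


Theorem lemma4p1 :
  exists C : nat,
  forall (V : finType) (e : rel V) (id : V -> nat) (a : nat),
    symmetric e -> irreflexive e -> injective id -> is_arboricity e a ->
    exists i : nat,
      i <= C * (trunc_log 2 #|V|).+1 /\
      (forall u v, e u v -> ((u, v) \in after e id i) || ((v, u) \in after e id i)) /\
      (forall u : V, #|[set v | (u, v) \in after e id i]| <= C * a).
Proof.
exists 4 => V e id a esym eirr idinj [[col [colsym [colk colacy]]] _].
exists (trunc_log 2 #|V|).+1; split; first lia.
split; last first.
  by move=> u; case: (out_inv esym eirr idinj colsym colk colacy (trunc_log 2 #|V|).+1 u).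
move=> u v euv; apply/negPn/negP => h.
have hu : undirected e (after e id (trunc_log 2 #|V|).+1) u v.
  by move: h; rewrite negb_or /undirected euv => /andP [-> ->].
have hp := und_pos hu.
have c1 : 0 < #|pos e (after e id (trunc_log 2 #|V|).+1)| by rewrite card_gt0; apply/set0Pn; exists u.
have c2 := after_pos esym eirr idinj (trunc_log 2 #|V|).+1.
have c3 := trunc_log_ltn #|V| (isT : 1 < 2).
move: c1 c2 c3; move: (2 ^ (trunc_log 2 #|V|).+1) #|pos e (after e id (trunc_log 2 #|V|).+1)| #|V| => x y z.
nia.
Qed.
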